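(* Let $L\cong\mathbf{2}^n$ be a Boolean lattice and let $R_L\cong\prod_{1}^{n}\mathbb{Z}_2$ be the Boolean ring associated with $L$ (multiplication corresponding to meet). Then $\mathrm{Incomp}(L)=AG(R_L)$.
   Context: For a bounded lattice $L$, the incomparability graph $\mathrm{Incomp}(L)$ has vertex set $L\setminus\{0,1\}$, with distinct $a,b$ adjacent iff $a$ and $b$ are incomparable. For a commutative ring $R$ with identity, $\mathrm{ann}(a)=\{x\in R: xa=0\}$, $Z(R)$ is the set of zero-divisors, and the annihilator graph $AG(R)$ has vertex set $Z(R)\setminus\{0\}$, with distinct $x,y$ adjacent iff $\mathrm{ann}(xy)\neq\mathrm{ann}(x)\cup\mathrm{ann}(y)$. The Boolean ring $R_L$ has underlying set $L$ with product $ab=a\wedge b$ (and sum the symmetric difference), so $\mathrm{ann}(a)$ is the principal ideal generated by the complement of $a$. *)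

(* Defs.v *)
From mathcomp Require Import all_boot.
Set Implicit Arguments. Unset Strict Implicit. Unset Printing Implicit Defensive.

(* The Boolean lattice 2^n is modelled as the power set lattice {set 'I_n}
   (order = inclusion, meet = :&:, join = :|:, 0 = set0, 1 = setT). *)
Notation BoolLat n := {set 'I_n}.

Section Defs.
Variable n : nat.
Local Notation L := (BoolLat n).

Definition comparable (a b : L) : bool := (a \subset b) || (b \subset a).
Definition incomp_vertices : {set L} := [set a : L | (a != set0) && (a != setT)].
Definition incomp_adj (a b : L) : bool := (a != b) && ~~ comparable a b.

Definition RL_zero : L := set0.
Definition RL_one : L := setT.
Definition RL_mul (a b : L) : L := a :&: b.
Definition RL_add (a b : L) : L := (a :\: b) :|: (b :\: a).

Definition ann (a : L) : {set L} := [set x : L | RL_mul x a == RL_zero].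
Definition zero_divisors : {set L} :=
  [set x : L | [exists y : L, (y != RL_zero) && (RL_mul x y == RL_zero)]].

Definition AG_vertices : {set L} := zero_divisors :\ RL_zero.
Definition AG_adj (x y : L) : bool :=
  (x != y) && (ann (RL_mul x y) != ann x :|: ann y).

End Defs.

(* Main.v *)
Require Import Defs.
From mathcomp Require Import all_boot.

Lemma annE n (a x : BoolLat n) : (x \in ann a) = (x \subset ~: a).
Proof. by rewrite inE /RL_mul /RL_zero setI_eq0 disjoints_subset. Qed.

Lemma adjE n (x y : BoolLat n) :
  (ann (RL_mul x y) != ann x :|: ann y) = ~~ Defs.comparable x y.
Proof.
rewrite /Defs.comparable /RL_mul.
case: (boolP (x \subset y)) => [xy|nxy] /=.
  apply/negbTE; rewrite negbK; apply/eqP/setP => z; rewrite in_setU !annE.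
  rewrite (setIidPl xy).
  case: (boolP (z \subset ~: x)) => //= nzx; apply/esym/negbTE/negP => zy.
  by move: nzx; rewrite (subset_trans zy (_ : ~: y \subset ~: x)) // setCS.
case: (boolP (y \subset x)) => [yx|nyx] /=.
  apply/negbTE; rewrite negbK; apply/eqP/setP => z; rewrite in_setU !annE.
  rewrite (setIidPr yx).
  case: (boolP (z \subset ~: y)) => nzy; rewrite ?orbT // orbF; apply/esym/negbTE/negP => zy.
  by move: nzy; rewrite (subset_trans zy (_ : ~: x \subset ~: y)) // setCS.
apply/negP => /eqP /setP /(_ (~: (x :&: y))).
rewrite in_setU !annE subxx setCI.
move/esym/orP => [h|h].
  have := subset_trans (subsetUr _ _) h; rewrite setCS => hh.
  by rewrite hh in nxy.
have := subset_trans (subsetUl _ _) h; rewrite setCS => hh.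
by rewrite hh in nyx.
Qed.

Theorem mainTheorem9 (n : nat) :
  incomp_vertices n = AG_vertices n /\
  (forall a b : BoolLat n, a \in incomp_vertices n -> b \in incomp_vertices n ->
     incomp_adj a b = AG_adj a b).
Proof.
split.
  apply/setP => x; rewrite /incomp_vertices /AG_vertices /zero_divisors !inE.
  rewrite /RL_zero; case: (x =P set0) => //= _.
  apply/idP/existsP => [nT|[y /andP[ny0 /eqP]]].
    exists (~: x); rewrite /RL_mul setICr eqxx andbT.
    by apply/negP => /eqP h; move: nT; rewrite -(setCK x) h setC0 eqxx.
  rewrite /RL_mul => h; apply/negP => /eqP hx; move: h.
  by rewrite hx setTI => /eqP; rewrite (negbTE ny0).
move=> a b _ _; by rewrite /incomp_adj /AG_adj adjE.
Qed.
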